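(* Let $\mathbb{X}$ be a basic reverse differential restriction category. For any map $g:A\times B\to C$ define $$g^{\dagger[A]}:=(\iota_0\times 1_C)\,R[g]\,\pi_1:A\times C\to B,$$ where $\iota_0=\langle 1_A,0\rangle:A\to A\times B$. For $f:A\to B$ define $D[f]:=R[f]^{\dagger[A]}=(\iota_0\times 1_A)R[R[f]]\pi_1:A\times A\to B$. Then $\mathbb{X}$ satisfies axiom [RD.6] if and only if $D[f]^{\dagger[A]}=R[f]$ for every map $f$, i.e. $$(\iota_0\times 1_B)\,R[D[f]]\,\pi_1=R[f]\quad\text{for all } f:A\to B,$$ where here $\iota_0=\langle 1_A,0\rangle:A\to A\times A$.
   Context: Composition is written in diagrammatic order: $fg$ means ''first $f$, then $g$''. A restriction category is a category with an operation sending each $f:A\to B$ to a map $\bar f:A\to A$ such that $\bar f f=f$, $\bar f\bar g=\bar g\bar f$ (for $f,g$ with common domain), $\overline{\bar f g}=\bar f\bar g$, and $f\bar g=\overline{fg}\,f$. A map $f$ is total if $\bar f=1$. The category has restriction products if: - there is an object $1$ with a total map $!_A:A\to 1$ for each $A$ such that every $f:A\to1$ equals $\bar f\,!_A$; - for all $A,B$ there is an object $A\times B$ with total maps $\pi_0,\pi_1$ such that for all $f:C\to A$, $g:C\to B$ there is a unique $\langle f,g\rangle$ with $\langle f,g\rangle\pi_0=\bar g f$ and $\langle f,g\rangle\pi_1=\bar f g$. Write $f\times g=\langle\pi_0f,\pi_1g\rangle$. A Cartesian left additive restriction category is a restriction category with restriction products in which every hom-set is a commutative monoid $(+,0)$ such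 that: - $\overline{f+g}=\bar f\bar g$ and $\bar 0=1$; - $x(f+g)=xf+xg$ and $x0=\bar x 0$; - $(f+g)\pi_i=f\pi_i+g\pi_i$ and $0\pi_i=0$. Write $\iota_0=\langle 1,0\rangle$ and $\iota_1=\langle 0,1\rangle$. A basic reverse differential restriction category is a Cartesian left additive restriction category with an operation sending each $f:A\to B$ to $R[f]:A\times B\to A$ satisfying: - [RD.1] $R[f+g]=R[f]+R[g]$ and $R[0]=0$. - [RD.2] $\langle a,b+c\rangle R[f]=\langle a,b\rangle R[f]+\langle a,c\rangle R[f]$ and $\langle a,0\rangle R[f]=\overline{af}\,0$. - [RD.3] $R[\pi_j]=\pi_1\iota_j$. - [RD.4] $R[\langle f,g\rangle]=(1\times\pi_0)R[f]+(1\times\pi_1)R[g]$. - [RD.5] $R[fg]=\langle\pi_0,\langle\pi_0f,\pi_1\rangle R[g]\rangle R[f]$. - [RD.8] $\overline{R[f]}=\bar f\times 1$. - [RD.9] $R[\bar f]=(\bar f\times1)\pi_1$. Axiom [RD.6] is: for all $f:A\to B$, $$\langle 1_A\times\pi_0,\,0\times\pi_1\rangle(\iota_0\times 1)R[R[R[f]]]\pi_1=(1_A\times\pi_1)R[f]$$ as maps $A\times(B\times B)\to A$, where $0:A\to A$. *)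

(* Defs.v *)
(* Plain Rocq (no library world needed): an axiomatic definition of
   basic reverse differential restriction categories.
   Composition is diagrammatic: [comp f g] means "first f, then g". *)

Set Implicit Arguments.

Record BRDRC := {
  ob : Type;
  hom : ob -> ob -> Type;
  idm : forall A, hom A A;
  comp : forall {A B C}, hom A B -> hom B C -> hom A C;
  comp_assoc : forall A B C D (f : hom A B) (g : hom B C) (h : hom C D),
      comp (comp f g) h = comp f (comp g h);
  comp_id_l : forall A B (f : hom A B), comp (idm A) f = f;
  comp_id_r : forall A B (f : hom A B), comp f (idm B) = f;

  rst : forall {A B}, hom A B -> hom A A;
  R1 : forall A B (f : hom A B), comp (rst f) f = f;
  R2 : forall A B C (f : hom A B) (g : hom A C),
      comp (rst f) (rst g) = comp (rst g) (rst f);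
  R3 : forall A B C (f : hom A B) (g : hom A C),
      rst (comp (rst f) g) = comp (rst f) (rst g);
  R4 : forall A B C (f : hom A B) (g : hom B C),
      comp f (rst g) = comp (rst (comp f g)) f;

  one : ob;
  bang : forall A, hom A one;
  bang_total : forall A, rst (bang A) = idm A;
  bang_unique : forall A (f : hom A one), f = comp (rst f) (bang A);

  prod : ob -> ob -> ob;
  pi0 : forall {A B}, hom (prod A B) A;
  pi1 : forall {A B}, hom (prod A B) B;
  pi0_total : forall A B, rst (@pi0 A B) = idm (prod A B);
  pi1_total : forall A B, rst (@pi1 A B) = idm (prod A B);
  pair : forall {A B C}, hom C A -> hom C B -> hom C (prod A B);
  pair_pi0 : forall A B C (f : hom C A) (g : hom C B),
      comp (pair f g) pi0 = comp (rst g) f;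
  pair_pi1 : forall A B C (f : hom C A) (g : hom C B),
      comp (pair f g) pi1 = comp (rst f) g;
  pair_unique : forall A B C (f : hom C A) (g : hom C B) (h : hom C (prod A B)),
      comp h pi0 = comp (rst g) f -> comp h pi1 = comp (rst f) g -> h = pair f g;

  plus : forall {A B}, hom A B -> hom A B -> hom A B;
  zero : forall A B, hom A B;
  plus_assoc : forall A B (f g h : hom A B), plus (plus f g) h = plus f (plus g h);
  plus_comm : forall A B (f g : hom A B), plus f g = plus g f;
  plus_zero : forall A B (f : hom A B), plus f (zero A B) = f;
  rst_plus : forall A B (f g : hom A B), rst (plus f g) = comp (rst f) (rst g);
  rst_zero : forall A B, rst (zero A B) = idm A;
  comp_plus : forall A B C (x : hom A B) (f g : hom B C),
      comp x (plus f g) = plus (comp x f) (comp x g);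
  comp_zero : forall A B C (x : hom A B), comp x (zero B C) = comp (rst x) (zero A C);
  plus_pi0 : forall A B C (f g : hom C (prod A B)),
      comp (plus f g) pi0 = plus (comp f pi0) (comp g pi0);
  plus_pi1 : forall A B C (f g : hom C (prod A B)),
      comp (plus f g) pi1 = plus (comp f pi1) (comp g pi1);
  zero_pi0 : forall A B C, comp (zero C (prod A B)) pi0 = zero C A;
  zero_pi1 : forall A B C, comp (zero C (prod A B)) pi1 = zero C B;

  Rd : forall {A B}, hom A B -> hom (prod A B) A;
  RD1_plus : forall A B (f g : hom A B), Rd (plus f g) = plus (Rd f) (Rd g);
  RD1_zero : forall A B, Rd (zero A B) = zero (prod A B) A;
  RD2_plus : forall A B C (f : hom A B) (a : hom C A) (b c : hom C B),
      comp (pair a (plus b c)) (Rd f)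
      = plus (comp (pair a b) (Rd f)) (comp (pair a c) (Rd f));
  RD2_zero : forall A B C (f : hom A B) (a : hom C A),
      comp (pair a (zero C B)) (Rd f) = comp (rst (comp a f)) (zero C A);
  RD3_0 : forall A B,
      Rd (@pi0 A B) = comp pi1 (pair (idm A) (zero A B));
  RD3_1 : forall A B,
      Rd (@pi1 A B) = comp pi1 (pair (zero B A) (idm B));
  RD4 : forall A B C (f : hom A B) (g : hom A C),
      Rd (pair f g)
      = plus (comp (pair (comp pi0 (idm A)) (comp pi1 pi0)) (Rd f))
             (comp (pair (comp pi0 (idm A)) (comp pi1 pi1)) (Rd g));
  RD5 : forall A B C (f : hom A B) (g : hom B C),
      Rd (comp f g) = comp (pair pi0 (comp (pair (comp pi0 f) pi1) (Rd g))) (Rd f);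
  RD8 : forall A B (f : hom A B),
      rst (Rd f) = pair (comp pi0 (rst f)) (comp pi1 (idm B));
  RD9 : forall A B (f : hom A B),
      Rd (rst f) = comp (pair (comp pi0 (rst f)) (comp pi1 (idm A))) pi1
}.

Arguments idm {_} A.
Arguments comp {_ A B C}.
Arguments rst {_ A B}.
Arguments one {_}.
Arguments bang {_} A.
Arguments prod {_}.
Arguments pi0 {_ A B}.
Arguments pi1 {_ A B}.
Arguments pair {_ A B C}.
Arguments plus {_ A B}.
Arguments zero {_} A B.
Arguments Rd {_ A B}.

Section Derived.
Context {X : BRDRC}.

Definition tensor {A B C D : ob X} (f : hom X A C) (g : hom X B D)
  : hom X (prod A B) (prod C D) := pair (comp pi0 f) (comp pi1 g).

Definition iota0 (A B : ob X) : hom X A (prod A B) := pair (idm A) (zero A B).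

Definition dagger {A B C : ob X} (g : hom X (prod A B) C) : hom X (prod A C) B :=
  comp (comp (tensor (iota0 A B) (idm C)) (Rd g)) pi1.

Definition Dd {A B : ob X} (f : hom X A B) : hom X (prod A A) B := dagger (Rd f).

Definition RD6 : Prop :=
  forall (A B : ob X) (f : hom X A B),
    comp (comp (comp (pair (tensor (idm A) (@pi0 _ B B)) (tensor (zero A A) (@pi1 _ B B)))
                     (tensor (iota0 (prod A B) A) (idm (prod A B))))
               (Rd (Rd (Rd f))))
         pi1
    = comp (tensor (idm A) (@pi1 _ B B)) (Rd f).

End Derived.
Arguments RD6 X : clear implicits.

(* Main.v *)
Require Import Defs.
Set Implicit Arguments.
Unset Strict Implicit.

Arguments comp_assoc {_ _ _ _ _} _ _ _.
Arguments comp_id_l {_ _ _} _.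
Arguments comp_id_r {_ _ _} _.
Arguments R1 {_ _ _} _.
Arguments R2 {_ _ _ _} _ _.
Arguments R3 {_ _ _ _} _ _.
Arguments R4 {_ _ _ _} _ _.
Arguments pi0_total {_ _ _}.
Arguments pi1_total {_ _ _}.
Arguments pair_pi0 {_ _ _ _} _ _.
Arguments pair_pi1 {_ _ _ _} _ _.
Arguments pair_unique {_ _ _ _} _ _ _ _ _.
Arguments plus_assoc {_ _ _} _ _ _.
Arguments plus_comm {_ _ _} _ _.
Arguments plus_zero {_ _ _} _.
Arguments rst_plus {_ _ _} _ _.
Arguments rst_zero {_ _ _}.
Arguments comp_plus {_ _ _ _} _ _ _.
Arguments comp_zero {_ _ _ _} _.
Arguments plus_pi0 {_ _ _ _} _ _.
Arguments plus_pi1 {_ _ _ _} _ _.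
Arguments zero_pi0 {_ _ _ _}.
Arguments zero_pi1 {_ _ _ _}.
Arguments RD1_plus {_ _ _} _ _.
Arguments RD1_zero {_ _ _}.
Arguments RD2_plus {_ _ _ _} _ _ _ _.
Arguments RD2_zero {_ _ _ _} _ _.
Arguments RD3_0 {_ _ _}.
Arguments RD3_1 {_ _ _}.
Arguments RD4 {_ _ _ _} _ _.
Arguments RD5 {_ _ _ _} _ _.
Arguments RD8 {_ _ _} _.
Arguments RD9 {_ _ _} _.

Notation "f ;; g" := (comp f g) (at level 39, right associativity).

Definition total {X : BRDRC} {A B : ob X} (f : hom X A B) := rst f = idm A.

Section L.
Context {X : BRDRC}.
Implicit Types A B C D : ob X.

Lemma cA A B C D (f : hom X A B) (g : hom X B C) (h : hom X C D) :
  (f ;; g) ;; h = f ;; g ;; h.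
Proof. apply comp_assoc. Qed.

Lemma rst_idm A : rst (idm A) = idm A.
Proof. pose proof (R1 (idm A)) as H. rewrite comp_id_r in H. exact H. Qed.

Lemma rst_idem A B (f : hom X A B) : rst f ;; rst f = rst f.
Proof. pose proof (R3 f f) as H. rewrite R1 in H. auto. Qed.

Lemma rst_rst A B (f : hom X A B) : rst (rst f) = rst f.
Proof. pose proof (R3 f (idm A)) as H. rewrite comp_id_r, rst_idm, comp_id_r in H. exact H. Qed.

Lemma rst_comp_le A B C (f : hom X A B) (g : hom X B C) : rst (f ;; g) = rst f ;; rst (f ;; g).
Proof. pose proof (R3 f (f ;; g)) as H. rewrite <- cA, R1 in H. exact H. Qed.

Lemma rst_comp A B C (f : hom X A B) (g : hom X B C) : rst (f ;; g) = rst (f ;; rst g).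
Proof.
  rewrite R4, R3, R2. rewrite <- rst_comp_le. reflexivity.
Qed.

Lemma rst_comp_tot A B C (f : hom X A B) (g : hom X B C) : total g -> rst (f ;; g) = rst f.
Proof. intro H. rewrite rst_comp, H, comp_id_r. reflexivity. Qed.

Lemma tot_comp A B C (f : hom X A B) (g : hom X B C) : total f -> total g -> total (f ;; g).
Proof. intros H1 H2. unfold total. rewrite rst_comp_tot; auto. Qed.

Lemma tot_pi0 A B : total (@pi0 X A B). Proof. apply pi0_total. Qed.
Lemma tot_pi1 A B : total (@pi1 X A B). Proof. apply pi1_total. Qed.
Lemma tot_idm A : total (idm A). Proof. apply rst_idm. Qed.
Lemma tot_zero A B : total (zero A B). Proof. apply rst_zero. Qed.
Lemma tot_plus A B (f g : hom X A B) : total f -> total g -> total (plus f g).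
Proof. intros H1 H2. unfold total. rewrite rst_plus, H1, H2, comp_id_l. reflexivity. Qed.

Lemma rst_pair A B C (f : hom X C A) (g : hom X C B) : rst (pair f g) = rst f ;; rst g.
Proof.
  rewrite <- (rst_comp_tot (pair f g) (tot_pi0 A B)), pair_pi0, R3, R2. reflexivity.
Qed.

Lemma tot_pair A B C (f : hom X C A) (g : hom X C B) : total f -> total g -> total (pair f g).
Proof. intros H1 H2. unfold total. rewrite rst_pair, H1, H2, comp_id_l. reflexivity. Qed.

Lemma pair_id A B : pair (@pi0 X A B) pi1 = idm (prod A B).
Proof.
  symmetry. apply pair_unique; rewrite comp_id_l, ?pi0_total, ?pi1_total, comp_id_l; reflexivity.
Qed.

Lemma tot_Rd A B (f : hom X A B) : total f -> total (Rd f).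
Proof. intro H. unfold total. rewrite RD8, H, !comp_id_r. apply pair_id. Qed.

Lemma comp_pair A B C D (x : hom X D C) (f : hom X C A) (g : hom X C B) :
  x ;; pair f g = pair (x ;; f) (x ;; g).
Proof.
  apply pair_unique.
  - rewrite cA, pair_pi0, <- cA, R4, cA. reflexivity.
  - rewrite cA, pair_pi1, <- cA, R4, cA. reflexivity.
Qed.

Lemma pair_eta A B C (h : hom X C (prod A B)) : pair (h ;; pi0) (h ;; pi1) = h.
Proof.
  symmetry. apply pair_unique.
  - rewrite (rst_comp_tot h (tot_pi1 A B)), <- cA, R1. reflexivity.
  - rewrite (rst_comp_tot h (tot_pi0 A B)), <- cA, R1. reflexivity.
Qed.

Lemma hom_ext A B C (h1 h2 : hom X C (prod A B)) :
  h1 ;; pi0 = h2 ;; pi0 -> h1 ;; pi1 = h2 ;; pi1 -> h1 = h2.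
Proof. intros H1 H2. rewrite <- (pair_eta h1), <- (pair_eta h2), H1, H2. reflexivity. Qed.

Lemma rst_tot A B (f : hom X A B) : total f -> rst f = idm A.
Proof. auto. Qed.

Lemma comp_zero_tot A B C (x : hom X A B) : total x -> x ;; zero B C = zero A C.
Proof. intro H. rewrite comp_zero, H, comp_id_l. reflexivity. Qed.

Lemma plus_zero_l A B (f : hom X A B) : plus (zero A B) f = f.
Proof. rewrite plus_comm. apply plus_zero. Qed.

Lemma rst_zero_plus A B (y : hom X A B) : plus (rst y ;; zero A B) y = y.
Proof.
  rewrite plus_comm. transitivity (plus (rst y ;; y) (rst y ;; zero A B)).
  { rewrite R1. reflexivity. }
  rewrite <- comp_plus, plus_zero, R1. reflexivity.
Qed.

Lemma pair_pi0a A B C D (f : hom X C A) (g : hom X C B) (k : hom X A D) :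
  pair f g ;; pi0 ;; k = rst g ;; f ;; k.
Proof. rewrite <- cA, pair_pi0, cA. reflexivity. Qed.
Lemma pair_pi1a A B C D (f : hom X C A) (g : hom X C B) (k : hom X B D) :
  pair f g ;; pi1 ;; k = rst f ;; g ;; k.
Proof. rewrite <- cA, pair_pi1, cA. reflexivity. Qed.
Lemma comp_paira A B C D E (x : hom X D C) (f : hom X C A) (g : hom X C B) (k : hom X (prod A B) E) :
  x ;; pair f g ;; k = pair (x ;; f) (x ;; g) ;; k.
Proof. rewrite <- cA, comp_pair. reflexivity. Qed.
Lemma zero_pi0a A B C D (k : hom X A D) : zero C (prod A B) ;; pi0 ;; k = zero C A ;; k.
Proof. rewrite <- cA, zero_pi0. reflexivity. Qed.
Lemma zero_pi1a A B C D (k : hom X B D) : zero C (prod A B) ;; pi1 ;; k = zero C B ;; k.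
Proof. rewrite <- cA, zero_pi1. reflexivity. Qed.
Lemma plus_pi0a A B C D (f g : hom X C (prod A B)) (k : hom X A D) :
  plus f g ;; pi0 ;; k = plus (f ;; pi0) (g ;; pi0) ;; k.
Proof. rewrite <- cA, plus_pi0. reflexivity. Qed.
Lemma plus_pi1a A B C D (f g : hom X C (prod A B)) (k : hom X B D) :
  plus f g ;; pi1 ;; k = plus (f ;; pi1) (g ;; pi1) ;; k.
Proof. rewrite <- cA, plus_pi1. reflexivity. Qed.
Lemma comp_plusa A B C D (x : hom X A B) (f g : hom X B C) (k : hom X C D) :
  x ;; plus f g ;; k = plus (x ;; f) (x ;; g) ;; k.
Proof. rewrite <- cA, comp_plus. reflexivity. Qed.
Lemma comp_zero_tota A B C D (x : hom X A B) (k : hom X C D) : total x -> x ;; zero B C ;; k = zero A C ;; k.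
Proof. intro H. rewrite <- cA, comp_zero_tot; auto. Qed.
Lemma rst_tota A B C (f : hom X A B) (k : hom X A C) : total f -> rst f ;; k = k.
Proof. intro H. rewrite H, comp_id_l. reflexivity. Qed.
Lemma RD2_zeroa A B C D (f : hom X A B) (a : hom X C A) (k : hom X A D) :
  pair a (zero C B) ;; Rd f ;; k = rst (a ;; f) ;; zero C A ;; k.
Proof. rewrite <- cA, RD2_zero, cA. reflexivity. Qed.

Lemma Rd_idm A : Rd (idm A) = pi1.
Proof.
  pose proof (RD9 (idm A)) as H. rewrite rst_idm, !comp_id_r, pair_id, comp_id_l in H. exact H.
Qed.

Lemma rst_idema A B C (f : hom X A B) (k : hom X A C) : rst f ;; rst f ;; k = rst f ;; k.
Proof. rewrite <- cA, rst_idem. reflexivity. Qed.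
Lemma rst_comp_r A B C (f : hom X A B) (g : hom X B C) : rst (f ;; rst g) = rst (f ;; g).
Proof. symmetry. apply rst_comp. Qed.
Lemma rst_comp_r2 A B C D (f : hom X A B) (g : hom X B C) (h : hom X C D) : rst (f ;; g ;; rst h) = rst (f ;; g ;; h).
Proof. rewrite (rst_comp f (g ;; rst h)), (rst_comp_r g h), rst_comp_r. reflexivity. Qed.
Lemma rst_comp_r3 A B C D E (f : hom X A B) (g : hom X B C) (h : hom X C D) (k : hom X D E) : rst (f ;; g ;; h ;; rst k) = rst (f ;; g ;; h ;; k).
Proof. rewrite (rst_comp f (g ;; h ;; rst k)), (rst_comp_r2 g h k), rst_comp_r. reflexivity. Qed.
Lemma R4a A B C D (f : hom X A B) (g : hom X B C) (k : hom X B D) : f ;; rst g ;; k = rst (f ;; g) ;; f ;; k.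
Proof. rewrite <- cA, R4, cA. reflexivity. Qed.
Lemma tot_rst A B (f : hom X A B) : total f -> total (rst f).
Proof. intro H. unfold total. rewrite rst_rst. exact H. Qed.
End L.

#[export] Hint Resolve tot_comp tot_pi0 tot_pi1 tot_idm tot_zero tot_plus tot_pair tot_Rd tot_rst : tot.
Ltac tot := eauto 20 with tot.

Ltac simp0 := rewrite ?cA, ?comp_id_l, ?comp_id_r, ?pair_pi0a, ?pair_pi1a, ?pair_pi0, ?pair_pi1, ?comp_paira, ?comp_pair, ?zero_pi0a, ?zero_pi1a, ?zero_pi0, ?zero_pi1, ?plus_pi0a, ?plus_pi1a, ?plus_pi0, ?plus_pi1, ?comp_plusa, ?comp_plus, ?plus_zero, ?plus_zero_l, ?pair_id, ?rst_idm, ?RD2_zeroa, ?RD2_zero, ?R3, ?rst_rst, ?rst_idema, ?rst_idem, ?pair_eta, ?rst_pair, ?rst_comp_r, ?rst_comp_r2, ?rst_comp_r3.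
Ltac simpT := repeat match goal with
 | |- context [rst ?f] => rewrite (rst_tot (f:=f)) by tot
 | |- context [comp ?x (comp (zero ?B ?C) ?k)] => rewrite (comp_zero_tota (x:=x) k) by tot
 | |- context [comp ?x (zero ?B ?C)] => rewrite (comp_zero_tot (x:=x) C) by tot
end.
Ltac notrst x := lazymatch x with rst _ => fail | _ => idtac end.
Ltac simpP := repeat match goal with
 | |- context [comp ?x (comp (rst ?y) ?z)] => notrst x; rewrite (R4a x y z)
 | |- context [comp ?x (rst ?y)] => notrst x; rewrite (R4 x y)
end.
Ltac simp := repeat (progress (simp0; simpT; simpP)).
Ltac simpR := repeat (progress (rewrite ?RD3_0, ?RD3_1, ?Rd_idm, ?RD1_zero, ?RD1_plus, ?RD4, ?RD5; simp0; simpT; simpP)).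
Ltac ext := repeat match goal with |- @eq (hom _ _ (prod _ _)) _ _ => apply hom_ext end.
Unset Implicit Arguments.
Section ST1. Context {X : BRDRC}.
Lemma Rtens_pi1 (A B C : ob X) (k : hom X A B) : total k -> Rd (tensor k (idm C)) ;; pi1 = pi1 ;; pi1.
Proof. intro Hk. unfold tensor. simpR. reflexivity. Qed.

Lemma pair_rst_l (A B C D : ob X) (k : hom X C D) (p : hom X C A) (q : hom X C B) :
  total p -> total q -> pair (rst k ;; p) q = rst k ;; pair p q.
Proof. intros Hp Hq. ext; simp; reflexivity. Qed.

Lemma pair_rst_r (A B C D : ob X) (k : hom X C D) (p : hom X C A) (q : hom X C B) :
  total p -> total q -> pair p (rst k ;; q) = rst k ;; pair p q.
Proof. intros Hp Hq. ext; simp; reflexivity. Qed.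

Lemma absorb (A B C D : ob X) (G : hom X A B) (p : hom X C A) (q : hom X C B) :
  total p -> total q -> rst (p ;; G) ;; pair p q ;; Rd G = pair p q ;; Rd G.
Proof.
  intros Hp Hq.
  assert (E : pair p q ;; rst (Rd G) = rst (p ;; G) ;; pair p q).
  { rewrite RD8. simp. ext; simp; reflexivity. }
  rewrite <- cA, <- E, cA, R1. reflexivity.
Qed.

Lemma RGpi1 (Z A B : ob X) (G : hom X Z (prod A B)) :
  Rd (G ;; pi1) = pair pi0 (pi1 ;; pair (zero B A) (idm B)) ;; Rd G.
Proof.
  rewrite RD5, RD3_1, pair_pi1a, pair_rst_r by tot.
  rewrite cA. apply absorb; tot.
Qed.
End ST1.
Section ST3. Context {X : BRDRC}.
Lemma L1 (A B : ob X) (f : hom X A B) :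
  dagger (Dd f) = tensor (idm A) (pair (zero B B) (idm B)) ;;
    comp (comp (comp (pair (tensor (idm A) (@pi0 _ B B)) (tensor (zero A A) (@pi1 _ B B)))
                     (tensor (iota0 (prod A B) A) (idm (prod A B))))
               (Rd (Rd (Rd f))))
         pi1.
Proof.
  unfold Dd, dagger. rewrite !cA. rewrite RD5, RGpi1, !cA. rewrite Rtens_pi1 by (unfold iota0; tot).
  unfold tensor, iota0. simp. reflexivity.
Qed.
End ST3.
Section ST4. Context {X : BRDRC}.
Lemma Rs (A B : ob X) : Rd (pair (@pi0 X A (prod B B)) (plus (pi1;;pi0) (pi1;;pi1))) ;; pi1 ;; pi1 = pi1 ;; pi1.
Proof. simpR. reflexivity. Qed.
Lemma Rs1 (A B : ob X) : Rd (pair (@pi0 X A (prod B B)) (pi1;;pi0)) ;; pi1 ;; pi1 = zero _ B.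
Proof. simpR. reflexivity. Qed.
Lemma Rs2 (A B : ob X) : Rd (pair (@pi0 X A (prod B B)) (pi1;;pi1)) ;; pi1 ;; pi1 = pi1 ;; pi1.
Proof. simpR. reflexivity. Qed.

Lemma rstK (A B : ob X) (f : hom X A B) :
  rst (pair (pair (pi0;; pi0) (zero (prod (prod A B) A) B)) pi1;; Rd (Rd f)) = rst (Rd (Rd f)).
Proof. rewrite rst_comp, <- (rst_rst (Rd (Rd f))), !RD8. simp. reflexivity. Qed.

Lemma L2a (A B : ob X) (f : hom X A B) :
  Rd (Rd f) ;; pi1 = tensor (pi0 ;; iota0 A B) (idm A) ;; Rd (Rd f) ;; pi1.
Proof.
  pose proof (RD2_plus f (@pi0 X A (prod B B)) (pi1;;pi0) (pi1;;pi1)) as H.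
  apply (f_equal Rd) in H. rewrite RD1_plus, !RD5 in H.
  apply (f_equal (fun z => pair (pair (pi0;;pi0) (pair (pi0;;pi1) (zero _ B))) pi1 ;; z ;; pi1 ;; pi1)) in H.
  simpl in H. rewrite !cA, Rs, comp_plusa, plus_pi1a, plus_pi1, !cA, Rs1, Rs2 in H.
  revert H. unfold tensor, iota0. simp. intro H. rewrite comp_zero, rst_pair, rst_tot, comp_id_l in H by tot.
  etransitivity; [exact H|].
  match goal with |- plus _ (?K ;; Rd (Rd f) ;; pi1) = _ =>
    replace (rst (Rd (Rd f))) with (rst (K ;; Rd (Rd f) ;; pi1)) end.
  { apply rst_zero_plus. }
  rewrite <- cA, rst_comp_tot by tot. apply rstK.
Qed.
End ST4.
Section ST5. Context {X : BRDRC}.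
Lemma pre2 (A B C D E : ob X) (a : hom X A B) (b : hom X B C) (c : hom X A D) (d : hom X D C) (k : hom X C E) :
  a ;; b = c ;; d -> a ;; b ;; k = c ;; d ;; k.
Proof. intro H. rewrite <- !cA, H. reflexivity. Qed.

Lemma Rfix (A C D : ob X) (k : hom X A A) (g : hom X (prod A C) D) :
  total k -> g = tensor k (idm C) ;; g -> Rd g ;; pi1 = pair (pi0 ;; tensor k (idm C)) pi1 ;; Rd g ;; pi1.
Proof.
  intros Hk H.
  transitivity (Rd (tensor k (idm C) ;; g) ;; pi1). { rewrite <- H. reflexivity. }
  rewrite RD5, cA, Rtens_pi1 by tot. simp. reflexivity.
Qed.

Lemma L2b (A B : ob X) (f : hom X A B) :
  let L := comp (comp (comp (pair (tensor (idm A) (@pi0 _ B B)) (tensor (zero A A) (@pi1 _ B B)))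
                     (tensor (iota0 (prod A B) A) (idm (prod A B))))
               (Rd (Rd (Rd f))))
         pi1 in
  L = tensor (idm A) (pi1 ;; pair (zero B B) (idm B)) ;; L.
Proof.
  intro L.
  set (N := pair (pair (pair (@pi0 X A (prod B B)) (pi1;;pi0)) (zero _ A)) (pi1;;pi1)).
  set (K := tensor (@pi0 X A B ;; iota0 A B) (idm A)).
  assert (E : L = N ;; pair (pi0 ;; K) pi1 ;; Rd (Rd (Rd f) ;; pi1) ;; pi1).
  { transitivity (N ;; (pair pi0 (pi1 ;; pair (zero B A) (idm B)) ;; Rd (Rd (Rd f))) ;; pi1).
    - unfold L. rewrite !cA. apply pre2. subst N. unfold tensor, iota0. ext; simp; reflexivity.
    - rewrite <- RGpi1. apply f_equal. apply Rfix. unfold iota0; tot. apply L2a. }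
  assert (EQ : N ;; pair (pi0 ;; K) pi1 = tensor (idm A) (pi1 ;; pair (zero B B) (idm B)) ;; N ;; pair (pi0 ;; K) pi1).
  { subst N K. unfold tensor, iota0. ext; simp; reflexivity. }
  clearbody L. subst L.
  transitivity ((tensor (idm A) (@pi1 X B B ;; pair (zero B B) (idm B)) ;; N ;; pair (pi0 ;; K) pi1) ;; Rd (Rd (Rd f) ;; pi1) ;; pi1).
  { rewrite <- EQ, cA. reflexivity. }
  rewrite !cA. reflexivity.
Qed.
End ST5.

Theorem mainTheorem9 (X : BRDRC) :
  RD6 X <-> (forall (A B : ob X) (f : hom X A B), dagger (Dd f) = Rd f).
Proof.
  split.
  - intros H6 A B f. rewrite L1. unfold RD6 in H6. rewrite H6.
    assert (E : tensor (idm A) (pair (zero B B) (idm B)) ;; tensor (idm A) (@pi1 X B B) = idm (prod A B)).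
    { unfold tensor. ext; simp; reflexivity. }
    rewrite <- cA, E, comp_id_l. reflexivity.
  - intros Hc. unfold RD6. intros A B f.
    pose proof (L2b _ _ f) as E. cbv zeta in E. rewrite E.
    assert (E2 : tensor (idm A) (@pi1 X B B ;; pair (zero B B) (idm B))
                 = tensor (idm A) (@pi1 X B B) ;; tensor (idm A) (pair (zero B B) (idm B))).
    { unfold tensor. ext; simp; reflexivity. }
    rewrite E2, cA, <- L1, Hc. reflexivity.
Qed.
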